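(* Let $TS=(S,\to,T,s_0)$ be the labelled transition system with states $S=\{s_0,s_1,s_2,s_3,s_4,s_5,s_6\}$, labels $T=\{a,b,c,d\}$, initial state $s_0$, and exactly the following ten arcs: $s_0\xrightarrow{a}s_1$, $s_0\xrightarrow{b}s_2$, $s_1\xrightarrow{b}s_3$, $s_2\xrightarrow{a}s_3$, $s_3\xrightarrow{c}s_4$, $s_4\xrightarrow{a}s_5$, $s_4\xrightarrow{d}s_0$, $s_5\xrightarrow{b}s_6$, $s_5\xrightarrow{d}s_1$, $s_6\xrightarrow{d}s_3$. Then there is no safe (i.e. $1$-bounded) Petri net with transition set $\{a,b,c,d\}$ that solves $TS$. More precisely, in every Petri net $N$ with transition set $\{a,b,c,d\}$ solving $TS$, if $M_4$ denotes the reachable marking corresponding to $s_4$, there is a place $p$ with $M_4(p)<F(p,b)$, and every such place $p$ carries at least $2$ tokens in the marking reached from $M_4$ by firing $ad$.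
   Context: A Petri net is a tuple $N=(P,T,F,M_0)$ with finite disjoint sets $P$ (places) and $T$ (transitions), a flow function $F\colon (P\times T)\cup(T\times P)\to\mathbb{N}$, and an initial marking $M_0\colon P\to\mathbb{N}$. A transition $t$ is enabled at a marking $M$ if $M(p)\ge F(p,t)$ for all $p\in P$; firing it yields $M'$ with $M'(p)=M(p)-F(p,t)+F(t,p)$. The reachability graph of $N$ is the labelled transition system whose states are the markings reachable from $M_0$, with initial state $M_0$ and arcs $(M,t,M')$ whenever $M$ is reachable and $t$ fires from $M$ to $M'$. $N$ solves a labelled transition system $TS$ (with label set equal to $T$) if its reachability graph is isomorphic to $TS$, i.e. there is a bijection between states mapping initial state to initial state and preserving and reflecting labelled arcs. $N$ is $k$-bounded if $M(p)\le k$ for every reachable marking $M$ and every place $p$; safe means $1$-bounded. *)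

(* Defs.v *)
From mathcomp Require Import all_boot.
Set Implicit Arguments. Unset Strict Implicit. Unset Printing Implicit Defensive.

Inductive trans := ta | tb | tc | td.

Inductive state := s0 | s1 | s2 | s3 | s4 | s5 | s6.

Inductive arc : state -> trans -> state -> Prop :=
| arc01 : arc s0 ta s1
| arc02 : arc s0 tb s2
| arc13 : arc s1 tb s3
| arc23 : arc s2 ta s3
| arc34 : arc s3 tc s4
| arc45 : arc s4 ta s5
| arc40 : arc s4 td s0
| arc56 : arc s5 tb s6
| arc51 : arc s5 td s1
| arc63 : arc s6 td s3.

(* A Petri net with finite place set P and transition set trans:
   the flow F is split into pre (P x T) and post (T x P). *)
Record petri_net (P : finType) := PetriNet {
  pre  : P -> trans -> nat;
  post : trans -> P -> nat;
  M0   : {ffun P -> nat}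
}.

Definition marking (P : finType) := {ffun P -> nat}.

Definition enabled (P : finType) (N : petri_net P) (M : marking P) (t : trans) : Prop :=
  forall p, pre N p t <= M p.

Definition fire (P : finType) (N : petri_net P) (M : marking P) (t : trans) : marking P :=
  [ffun p => M p - pre N p t + post N t p].

Inductive reachable (P : finType) (N : petri_net P) : marking P -> Prop :=
| reach0 : reachable N (M0 N)
| reachS : forall M t, reachable N M -> enabled N M t -> reachable N (fire N M t).

Definition rg_arc (P : finType) (N : petri_net P) (M : marking P) (t : trans) (M' : marking P) : Prop :=
  reachable N M /\ enabled N M t /\ fire N M t = M'.

Definition solves_via (P : finType) (N : petri_net P) (f : state -> marking P) : Prop :=
  [/\ f s0 = M0 N,
      (forall s, reachable N (f s)),
      injective f,
      (forall M, reachable N M -> exists s, f s = M) &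
      (forall s t s', arc s t s' <-> rg_arc N (f s) t (f s'))].

Definition solves (P : finType) (N : petri_net P) : Prop :=
  exists f : state -> marking P, solves_via N f.

Definition safe (P : finType) (N : petri_net P) : Prop :=
  forall M, reachable N M -> forall p, M p <= 1.

(* Main.v *)
Require Import Defs.
From mathcomp Require Import all_boot.
From mathcomp Require Import zify.

Lemma part2 (P : finType) (N : petri_net P) (f : state -> marking P) :
     solves_via N f ->
     (exists p, f s4 p < pre N p tb) /\
     (forall p, f s4 p < pre N p tb -> 2 <= fire N (fire N (f s4) ta) td p).
Proof.
case=> _ Hr _ Hsurj Hiff.
have A := fun s t s' (h : Defs.arc s t s') => proj1 (Hiff s t s') h.
have [_ [en01 fi01]] := A _ _ _ arc01.
have [_ [en02 _]] := A _ _ _ arc02.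
have [_ [en45 fi45]] := A _ _ _ arc45.
have [_ [en40 fi40]] := A _ _ _ arc40.
have [_ [en56 _]] := A _ _ _ arc56.
have [_ [en51 fi51]] := A _ _ _ arc51.
split.
  case: (boolP [exists p, f s4 p < pre N p tb]) => [/existsP //|/existsPn H].
  have en4b : enabled N (f s4) tb by move=> p; rewrite leqNgt; exact: H p.
  have [s Hs] := Hsurj _ (reachS (Hr s4) en4b).
  have : Defs.arc s4 tb s by apply/Hiff; split; [exact: Hr|split; [exact: en4b|by rewrite Hs]].
  by move=> h; inversion h.
move=> p hp.
rewrite fi45 fi51.
have h0 := f_equal (fun M : marking P => M p) fi40; rewrite /= /fire ffunE in h0.
have h5 := f_equal (fun M : marking P => M p) fi45; rewrite /= /fire ffunE in h5.
have h1 := f_equal (fun M : marking P => M p) fi01; rewrite /= /fire ffunE in h1.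
have a1 := en01 p; have a2 := en02 p; have a3 := en45 p; have a4 := en40 p;
have a5 := en56 p.
lia.
Qed.

Theorem mainTheorem1 :
  (forall (P : finType) (N : petri_net P), solves N -> ~ safe N) /\
  (forall (P : finType) (N : petri_net P) (f : state -> marking P),
     solves_via N f ->
     (exists p, f s4 p < pre N p tb) /\
     (forall p, f s4 p < pre N p tb -> 2 <= fire N (fire N (f s4) ta) td p)).
Proof.
split; last exact: part2.
move=> P N [f Hf] Hs.
have [[p hp] H2] := @part2 P N f Hf.
have := H2 p hp.
case: Hf => _ Hr _ _ Hiff.
have [_ [_ fi45]] := proj1 (Hiff _ _ _) arc45.
have [_ [_ fi51]] := proj1 (Hiff _ _ _) arc51.
rewrite fi45 fi51 => h.
have := Hs _ (Hr s1) p. lia.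
Qed.
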